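(* Consider $N\ge2$ agents $V=\{1,\dots,N\}$ with states $\mathbf x(t)\in\mathbb{R}^N$ evolving according to $$\dot{\mathbf x}(t)=-L(t)\mathbf x(t)+\mathbf u(t),$$ i.e. $\dot x_i=\sum_{j\in\mathcal N_i}|a_{ij}(t)|(\operatorname{sgn}(a_{ij}(t))x_j-x_i)+u_i$, over a time-varying signed interaction graph $\mathcal G_A(t)$ that is uniformly quasi strongly $\delta$-connected (with constant $T>0$) and whose coefficients satisfy (A1)–(A3) below. Suppose that for every $t\ge0$ the union graph $G_\delta[t,t+T)$ contains a fixed node set $S\subseteq V$ that forms a root node set (there is a $\delta$-path in $G_\delta[t,t+T)$ from $S$ to every other node), and that the subgraph induced by $S$ is persistently structurally balanced. Let $\mathbf x_d\in\mathbb{R}^N$ be any desired state and apply the control input $$\mathbf u(t)=L(t)\mathbf x_d-K(t)\bigl(\mathbf x(t)-\mathbf x_d\bigr),\qquad K(t)=\operatorname{diag}(k_1(t),\dots,k_N(t)),$$ where (P1) each $k_i(\cdot)$ is continuous for almost all $t\ge t_0$ (its discontinuities form a set of Lebesgue measure zero), and (P2) there exists $\underline\kappa>0$ such that $k_i(t)\in[\underline\kappa,\infty)$ for $i\in S$ and $k_j(t)\equiv0$ for $j\notin S$, for all $t\ge t_0$. Then the closed-loop system achieves the desired steady state: $\mathbf x(t)\to\mathbf x_d$ as $t\to\infty$.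
   Context: $t_0\ge0$ is the initial time. $\operatorname{sgn}$ is the sign function; $a_{ij}(t)\in\mathbb{R}$ is the signed influence of agent $j$ on agent $i$; $\mathcal N_i$ is the set of incoming neighbors of $i$. $L(t)$ is the signed Laplacian: $[L(t)]_{ii}=\sum_{k\in\mathcal N_i}|a_{ik}(t)|$, $[L(t)]_{ij}=-a_{ij}(t)$ for $i\neq j$. Solutions are understood in the Carathéodory (absolutely continuous) sense. Assumptions: (A1) each $a_{ij}(t)$ is piecewise continuous on every compact interval with discontinuity set of Lebesgue measure zero; (A2) $a_{ii}\equiv0$; (A3) there is $M_0>0$ with $\int_{t_1}^{t_2}|a_{ij}(s)|\,ds\le M_0(t_2-t_1)$ for all $t_1\le t_2$. Graph notions: for $\delta>0$, a $\delta$-arc from $j$ to $i$ on $[t_1,t_2)$ means $\int_{t_1}^{t_2}|a_{ij}(t)|\,dt\ge\delta(t_2-t_1)$; a $\delta$-path on $[t_1,t_2)$ is a directed path of $\delta$-arcs on $[t_1,t_2)$; $G_\delta[t_1,t_2)$ is the digraph on $V$ whose arcs are the $\delta$-arcs on $[t_1,t_2)$, and $G_\delta^\infty$ is the union of all $\delta$-arcs appearing over $[0,\infty)$; condensation graphs have strongly connected components (SCCs) as nodes, and an SCC is closed if it has no incoming arcs from other SCCs. $\mathcal G_A(t)$ is uniformly quasi strongly $\delta$-connected if there is $T>0$ such that for every $t\ge0$ the condensation graph of $G_\delta[t,t+T)$ has a root node with a $\delta$-path to every other node. Persistent structural balance: when $\mathcal G_A(t)$ is uniformly quasi strongly $\delta$-connected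 and the condensation graph of $G_\delta^\infty$ contains a fixed node set $S$ forming a closed SCC, this SCC is persistently structurally balanced if for all $t\ge0$ there exists a unique bipartition $S=V_1^s\cup V_2^s$, $V_1^s\cap V_2^s=\varnothing$, such that $a_{jk}(t)\ge0$ whenever $j,k$ lie in the same part and $a_{jk}(t)\le0$ whenever $j,k$ lie in different parts. *)

(* Defs.v *)
From HB Require Import structures.
From mathcomp Require Import all_boot all_order all_algebra.
From mathcomp Require Import all_classical all_reals all_analysis.
Set Implicit Arguments. Unset Strict Implicit. Unset Printing Implicit Defensive.
Import Order.TTheory GRing.Theory Num.Theory.
Import numFieldNormedType.Exports.
Local Open Scope classical_set_scope.
Local Open Scope ring_scope.

Section SignedNetwork.
Variables (R : realType) (N : nat).

(* a i j t : signed influence of agent j on agent i at time t *)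
Implicit Types (a : 'I_N -> 'I_N -> R -> R) (k : 'I_N -> R -> R).

Local Notation mu := (@lebesgue_measure R).

Definition A1 a : Prop :=
  forall i j : 'I_N,
    mu.-negligible [set t : R | 0 <= t /\ ~ {for t, continuous (a i j)}].

Definition A2 a : Prop := forall (i : 'I_N) (t : R), a i i t = 0.

Definition A3 a : Prop :=
  exists M0 : R, 0 < M0 /\
    forall (i j : 'I_N) (t1 t2 : R), 0 <= t1 -> t1 <= t2 ->
      (\int[mu]_(s in `[t1, t2[) (`|a i j s|)%:E <= (M0 * (t2 - t1))%:E)%E.

Definition delta_arc a (delta t1 t2 : R) (j i : 'I_N) : Prop :=
  (\int[mu]_(s in `[t1, t2[) (`|a i j s|)%:E >= (delta * (t2 - t1))%:E)%E.

Inductive dpath (E : 'I_N -> 'I_N -> Prop) : 'I_N -> 'I_N -> Prop :=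
| dpath_refl x : dpath E x x
| dpath_step x y z : dpath E x y -> E y z -> dpath E x z.

Definition delta_path a (delta t1 t2 : R) (j i : 'I_N) : Prop :=
  dpath (delta_arc a delta t1 t2) j i.

(* uniformly quasi strongly delta-connected with constant T: for every
   t >= 0 the condensation graph of G_delta[t,t+T) has a root node (an SCC)
   with a delta-path to every other node, i.e. some node r of G_delta[t,t+T)
   has a delta-path to every node *)
Definition uqs_connected a (delta T : R) : Prop :=
  0 < T /\ forall t : R, 0 <= t ->
    exists r : 'I_N, forall v : 'I_N, delta_path a delta t (t + T) r v.

Definition root_node_set a (delta T : R) (S : {set 'I_N}) : Prop :=
  forall t : R, 0 <= t -> forall v : 'I_N,
    exists2 r : 'I_N, r \in S & delta_path a delta t (t + T) r v.

Definition balanced_bipartition a (S V1 : {set 'I_N}) (t : R) : Prop :=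
  V1 \subset S /\
  forall j k : 'I_N, j \in S -> k \in S ->
    (((j \in V1) = (k \in V1)) -> 0 <= a j k t) /\
    (((j \in V1) <> (k \in V1)) -> a j k t <= 0).

(* persistent structural balance of the subgraph induced by S: for all t >= 0
   there is a unique (unordered) bipartition {V1, V2} of S *)
Definition persistently_balanced a (S : {set 'I_N}) : Prop :=
  forall t : R, 0 <= t ->
    exists V1 : {set 'I_N}, balanced_bipartition a S V1 t /\
      forall W1 : {set 'I_N}, balanced_bipartition a S W1 t ->
        W1 = V1 \/ W1 = S :\: V1.

Definition signed_laplacian a (t : R) : 'M[R]_N :=
  \matrix_(i, j) (if i == j then \sum_(l < N) `|a i l t| else - a i j t).

Definition gain_matrix k (t : R) : 'M[R]_N := diag_mx (\row_i k i t).

Definition control a k (xd : 'cV[R]_N) (x : R -> 'cV[R]_N) (t : R) : 'cV[R]_N :=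
  signed_laplacian a t *m xd - gain_matrix k t *m (x t - xd).

Definition closed_loop_rhs a k (xd : 'cV[R]_N) (x : R -> 'cV[R]_N) (t : R)
  : 'cV[R]_N :=
  - (signed_laplacian a t *m x t) + control a k xd x t.

Definition caratheodory_solution a k (xd : 'cV[R]_N) (t0 : R)
  (x : R -> 'cV[R]_N) : Prop :=
  forall (t : R) (i : 'I_N), t0 <= t ->
    mu.-integrable `[t0, t] (fun s => (closed_loop_rhs a k xd x s i ord0)%:E) /\
    x t i ord0 = x t0 i ord0 +
      Rintegral mu `[t0, t] (fun s => closed_loop_rhs a k xd x s i ord0).

Definition P1 k (t0 : R) : Prop :=
  forall i : 'I_N,
    mu.-negligible [set t : R | t0 <= t /\ ~ {for t, continuous (k i)}].

Definition P2 k (S : {set 'I_N}) (t0 : R) : Prop :=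
  exists kappa : R, 0 < kappa /\
    forall (t : R) (i : 'I_N), t0 <= t ->
      (i \in S -> kappa <= k i t) /\ (i \notin S -> k i t = 0).

End SignedNetwork.

(* Main.v *)
Require Import Defs.
From HB Require Import structures.
From mathcomp Require Import all_boot all_order all_algebra.
From mathcomp Require Import all_classical all_reals all_analysis.
From mathcomp Require Import ring lra measurable_realfun.
Set Implicit Arguments. Unset Strict Implicit. Unset Printing Implicit Defensive.
Import Order.TTheory GRing.Theory Num.Theory.
Import numFieldNormedType.Exports.
Import HBSimple HBNNSimple.
Local Open Scope classical_set_scope.
Local Open Scope ring_scope.

Section Pure.
Variable R : realType.

Lemma within_eps (f : R -> R) u v x eps :
  {within `[u, v], continuous f} -> u <= x <= v -> 0 < eps ->
  exists2 d, 0 < d & forall y, u <= y <= v -> `|x - y| < d -> `|f x - f y| < eps.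
Proof.
move=> /subspace_continuousP cf xuv e0.
have xin : [set` `[u, v]] x by rewrite /= in_itv.
move: (cf x xin) => /cvgrPdist_lt /(_ _ e0).
rewrite near_withinE => /nbhs_ballP [d d0 H].
exists d => // y yuv xy; apply: H.
  by rewrite -ball_normE /ball_ /=.
by rewrite /= in_itv.
Qed.

End Pure.

Section Pure2.
Variable R : realType.

Lemma ML (phi : R -> R) u v c beta :
  u <= v -> {within `[u, v], continuous phi} -> 0 <= beta ->
  (forall s, u <= s <= v -> (forall t, s < t <= v -> c < phi t) -> phi v - phi s <= beta) ->
  phi v <= Num.max (phi u) c + beta.
Proof.
move=> uv cphi b0 H.
have [hv|hv] := leP (phi v) c.
  by apply: (le_trans hv); rewrite -[X in X <= _]addr0 lerD // le_max lexx orbT.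
pose E := [set t | u <= t <= v /\ phi t <= c].
have [[t0 Et0]|nE] := pselect (exists t, E t); last first.
  have := H u; rewrite lexx uv => /(_ isT).
  have Hc : forall t, u < t <= v -> c < phi t.
    move=> t /andP[ut tv]; rewrite ltNge; apply/negP => ptc; apply: nE.
    by exists t; rewrite /E /= (ltW ut) tv.
  move=> /(_ Hc) hh.
  have : phi u <= Num.max (phi u) c by rewrite le_max lexx.
  lra.
have hsE : has_sup E.
  split; first by exists t0.
  by exists v => t [/andP[_ tv] _].
set s := sup E.
have us : u <= s.
  have := sup_upper_bound hsE Et0; case: Et0 => /andP[ut0 _] _ ts.
  exact: le_trans ut0 ts.
have sv : s <= v.
  apply: ge_sup; first by exists t0.
  by move=> t [/andP[_ tv] _].
have hs : u <= s <= v by rewrite us sv.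
have Hc : forall t, s < t <= v -> c < phi t.
  move=> t /andP[st tv]; rewrite ltNge; apply/negP => ptc.
  have Et : E t by split => //; rewrite tv andbT (le_trans us) // ltW.
  have := sup_upper_bound hsE Et; rewrite -/s => ts.
  by move: (lt_le_trans st ts); rewrite ltxx.
have psc : phi s <= c.
  rewrite leNgt; apply/negP => cps.
  have e0 : 0 < phi s - c by rewrite subr_gt0.
  have [d d0 Hd] := within_eps cphi hs e0.
  have [y Ey sy] := sup_adherent d0 hsE.
  have ys : y <= s := sup_upper_bound hsE Ey.
  case: Ey => yuv pyc.
  have := Hd y yuv.
  rewrite (ger0_norm (x:=s - y)) ?subr_ge0 // => /(_ (ltac:(by rewrite ltrBlDr addrC -ltrBlDr))).
  move/(le_lt_trans (ler_norm _)); rewrite ltrD2l ltrN2 => cpy.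
  by move: (lt_le_trans cpy pyc); rewrite ltxx.
have := H s hs Hc.
move=> hh.
have : c <= Num.max (phi u) c by rewrite le_max lexx orbT.
lra.
Qed.

End Pure2.

Section IntLemmas.
Variable R : realType.
Local Notation mu := (@lebesgue_measure R).

Lemma itv_integrable_cst (s v c : R) : mu.-integrable `]s, v] (EFin \o cst c).
Proof.
apply/integrableP; split; first exact/measurable_EFinP/measurable_cst.
rewrite (eq_integral (cst `|c|%:E)); last by move=> t _.
rewrite integral_cst //= lebesgue_measure_itv /=.
by case: ifP => _; rewrite ?mule0 ?ltry // -EFinD -EFinM ltry.
Qed.

Lemma mu_oc (s v : R) : s <= v -> fine (mu `]s, v]) = v - s.
Proof.
move=> sv; rewrite lebesgue_measure_itv /= lte_fin.
have [svl|vs] := ltP s v; first by rewrite -EFinD.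
have -> : s = v by apply/eqP; rewrite eq_le sv vs.
by rewrite subrr.
Qed.

Lemma Rint_cst_oc (s v c : R) : s <= v -> \int[mu]_(t in `]s, v]) c = c * (v - s).
Proof.
move=> sv; rewrite Rintegral_cst //; congr (c * _); exact: mu_oc.
Qed.

Lemma within_addc (f : R -> R) (A : set R) c :
  {within A, continuous f} -> {within A, continuous (fun t => c + f t)}.
Proof.
move=> cf x; exact: (continuousD (@cst_continuous (subspace A) R c x) (cf x)).
Qed.

Lemma within_mulc (f : R -> R) (A : set R) c :
  {within A, continuous f} -> {within A, continuous (fun t => c * f t)}.
Proof.
move=> cf x; exact: (continuousM (@cst_continuous (subspace A) R c x) (cf x)).
Qed.

Lemma within_norm (f : R -> R) (A : set R) :
  {within A, continuous f} -> {within A, continuous (fun t => `|f t|)}.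
Proof.
move=> cf x; apply: continuous_comp; first exact: cf.
exact: norm_continuous.
Qed.

End IntLemmas.

Section Dyn.
Variables (R : realType) (N : nat).
Local Notation mu := (@lebesgue_measure R).
Variables (a : 'I_N -> 'I_N -> R -> R) (k : 'I_N -> R -> R) (e g : 'I_N -> R -> R).
Variables (t0 M0 : R) (Z : set R).
Hypothesis HM0 : 0 < M0.
Hypothesis mZ : measurable (Z : set (measurableTypeR R)).
Hypothesis muZ : mu Z = 0%E.
Hypothesis Hgood : forall t, t0 <= t -> ~ Z t -> forall i l, `|a i l t| <= M0.
Hypothesis Hk0 : forall i t, t0 <= t -> 0 <= k i t.
Hypothesis Hg : forall i t, g i t =
  - (\sum_l `|a i l t|) * e i t + \sum_l a i l t * e l t - k i t * e i t.
Hypothesis Hint : forall i t, t0 <= t -> mu.-integrable `[t0, t] (EFin \o g i).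
Hypothesis Heq : forall i t, t0 <= t ->
  e i t = e i t0 + \int[mu]_(s in `[t0, t]) g i s.

Lemma L_cont i u v : t0 <= u -> u <= v -> {within `[u, v], continuous (e i)}.
Proof.
move=> tu uv; have tv := le_trans tu uv.
have c1 := parameterized_integral_continuous tv (Hint i tv).
have c2 := within_addc (c:=e i t0) c1.
have c3 : {within `[t0, v], continuous (e i)}.
  apply: (subspace_eq_continuous _ c2) => t; rewrite inE /= in_itv /= => /andP[t0t tv'].
  exact/esym/(Heq i t0t).
apply: continuous_subspaceW c3 => t /=; rewrite !in_itv /= => /andP[ut tv'].
by rewrite tv' (le_trans tu ut).
Qed.

Lemma L_int_oc i s v : t0 <= s -> s <= v -> mu.-integrable `]s, v] (EFin \o g i).
Proof.
move=> ts sv; apply: (integrableS _ _ _ (Hint i (le_trans ts sv))) => //.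
by move=> t /=; rewrite !in_itv /= => /andP[st ->]; rewrite andbT (le_trans ts) // ltW.
Qed.

Lemma L_int_ocZ i s v sg : t0 <= s -> s <= v ->
  mu.-integrable `]s, v] (EFin \o (fun t => sg * g i t)).
Proof.
move=> ts sv; have H := L_int_oc i ts sv.
have H2 : mu.-integrable `]s, v] (fun t => (sg%:E * (EFin \o g i) t)%E).
  by apply: integrableZl.
by apply: eq_integrable H2 => // t _ /=; rewrite EFinM.
Qed.

Lemma L_diff i sg s v : t0 <= s -> s <= v ->
  sg * (e i v - e i s) = \int[mu]_(t in `]s, v]) (sg * g i t).
Proof.
move=> ts sv; have tv := le_trans ts sv.
rewrite (Heq i tv) (Heq i ts).
have -> : e i t0 + \int[mu]_(s0 in `[t0, v]) g i s0 - (e i t0 + \int[mu]_(s0 in `[t0, s]) g i s0)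
  = \int[mu]_(s0 in `[t0, v]) g i s0 - \int[mu]_(s0 in `[t0, s]) g i s0 by ring.
rewrite (Rintegral_itvB (Hint i tv)) ?bnd_simp //.
by rewrite RintegralZl //; exact: L_int_oc.
Qed.

Lemma Rint_negl (D : set R) (f : R -> R) : measurable (D : set (measurableTypeR R)) ->
  mu.-integrable D (EFin \o f) ->
  \int[mu]_(t in D) f t = \int[mu]_(t in D `\` Z) f t.
Proof.
by move=> mD fi; rewrite /Rintegral (negligible_integral mZ mD fi muZ).
Qed.

Lemma L_bound i sg s v (F : R -> R) : t0 <= s -> s <= v ->
  mu.-integrable `]s, v] (EFin \o F) ->
  (forall t, s < t <= v -> ~ Z t -> sg * g i t <= F t) ->
  sg * (e i v - e i s) <= \int[mu]_(t in `]s, v]) F t.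
Proof.
move=> ts sv Fi HF; rewrite (L_diff _ _ ts sv).
have gi := L_int_ocZ i sg ts sv.
rewrite (Rint_negl _ gi) // (Rint_negl _ Fi) //.
apply: le_Rintegral; first exact: measurableD.
- by apply: integrableS gi => //; exact: measurableD.
- by apply: integrableS Fi => //; exact: measurableD.
move=> t [/= + nZ]; rewrite in_itv /= => /andP[st tv]; apply: HF => //.
by rewrite st tv.
Qed.

Lemma L_bound_cst i sg s v G : t0 <= s -> s <= v ->
  (forall t, s < t <= v -> ~ Z t -> sg * g i t <= G) ->
  sg * (e i v - e i s) <= G * (v - s).
Proof.
move=> ts sv HG; rewrite -(@Rint_cst_oc _ s v G) //.
apply: (@L_bound i sg s v (fun=> G)) => //; exact: itv_integrable_cst.
Qed.


Let D := M0 *+ N.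

Lemma D_ge0 : 0 <= D.
Proof. by rewrite /D mulrn_wge0 // ltW. Qed.

Lemma sum_le_D i t : t0 <= t -> ~ Z t -> \sum_l `|a i l t| <= D.
Proof.
move=> tt nZ; rewrite /D -[N in M0 *+ N]card_ord -sumr_const.
by apply: ler_sum => l _; apply: Hgood.
Qed.

Lemma sum_aw i t (w : 'I_N -> R) W : (forall l, w l <= W) ->
  \sum_l `|a i l t| * w l <= (\sum_l `|a i l t|) * W.
Proof.
move=> hw; rewrite mulr_suml; apply: ler_sum => l _.
by apply: ler_wpM2l => //.
Qed.

Lemma CB i sg t : `|sg| = 1 ->
  sg * g i t <= \sum_l `|a i l t| * (`|e l t| - sg * e i t) - k i t * (sg * e i t).
Proof.
move=> hsg.
have h1 : sg * (\sum_l a i l t * e l t) <= \sum_l `|a i l t| * `|e l t|.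
  rewrite mulr_sumr; apply: ler_sum => l _.
  by apply: (le_trans (ler_norm _)); rewrite !normrM hsg mul1r.
have h2 : \sum_l `|a i l t| * (`|e l t| - sg * e i t) =
    \sum_l `|a i l t| * `|e l t| - (\sum_l `|a i l t|) * (sg * e i t).
  by rewrite mulr_suml -sumrB; apply: eq_bigr => l _; ring.
rewrite Hg h2.
have -> : sg * (- (\sum_l `|a i l t|) * e i t + \sum_l a i l t * e l t - k i t * e i t)
  = sg * (\sum_l a i l t * e l t) - (\sum_l `|a i l t|) * (sg * e i t) - k i t * (sg * e i t)
  by ring.
lra.
Qed.

Lemma StepML i sg u t c Bd : `|sg| = 1 -> t0 <= u -> u <= t -> 0 <= c -> c <= Bd ->
  (forall q s, u <= s <= t -> `|e q s| <= Bd) ->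
  sg * e i t <= Num.max (sg * e i u) c + D * (Bd - c) * (t - u).
Proof.
move=> hsg tu ut c0 cB HB.
have D0 := D_ge0.
apply: (ML (phi := fun s => sg * e i s)) => //.
- by apply: within_mulc; apply: L_cont.
- by apply: mulr_ge0; [apply: mulr_ge0 => //; rewrite subr_ge0|rewrite subr_ge0].
move=> s /andP[us st] Hc; rewrite -mulrBr.
have ts : t0 <= s := le_trans tu us.
apply: (@le_trans _ _ (D * (Bd - c) * (t - s))).
  apply: L_bound_cst => // tau /andP[stau taut] nZ.
  have t0tau : t0 <= tau by rewrite (le_trans ts) // ltW.
  have hc := Hc tau (ltac:(by rewrite stau taut)).
  apply: (le_trans (CB i tau hsg)).
  have hk : 0 <= k i tau * (sg * e i tau).
    by apply: mulr_ge0; [exact: Hk0|rewrite (le_trans c0) // ltW].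
  have hs : \sum_l `|a i l tau| * (`|e l tau| - sg * e i tau) <= (\sum_l `|a i l tau|) * (Bd - c).
    have utau : u <= tau <= t by rewrite taut andbT (le_trans us) // ltW.
    by apply: sum_aw => l; have := HB l tau utau; lra.
  have hd : (\sum_l `|a i l tau|) * (Bd - c) <= D * (Bd - c).
    by apply: ler_wpM2r; [rewrite subr_ge0|exact: sum_le_D].
  lra.
apply: ler_wpM2l; first by apply: mulr_ge0 => //; rewrite subr_ge0.
by rewrite lerD2l lerN2.
Qed.


Let h0 := (2 * D + 2)^-1.

Lemma h0_gt0 : 0 < h0.
Proof. by rewrite /h0 invr_gt0; have := D_ge0; lra. Qed.

Lemma Dh0 : D * h0 <= 2^-1.
Proof.
have H : (2 * D + 2) * h0 = 1 by rewrite /h0 mulfV //; have := D_ge0; lra.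
have := h0_gt0; lra.
Qed.

Lemma small X y : 0 <= X -> 0 <= y -> y <= h0 -> D * X * y <= X / 2.
Proof.
move=> X0 y0 yh.
have e1 : 0 <= D * X * (h0 - y) by apply: mulr_ge0; [apply: mulr_ge0 => //; exact: D_ge0|lra].
have e2 : 0 <= X * (2^-1 - D * h0) by apply: mulr_ge0 => //; have := Dh0; lra.
lra.
Qed.

Lemma MaxStep u B0 : t0 <= u -> 0 <= B0 -> (forall q, `|e q u| <= B0) ->
  forall q t, u <= t <= u + h0 -> `|e q t| <= B0.
Proof.
move=> tu B00 Hu.
have h00 := h0_gt0.
have uh : u <= u + h0 by lra.
have Hmax : forall q, exists c, c \in `[u, u + h0] /\
    forall t, t \in `[u, u + h0] -> `|e q t| <= `|e q c|.
  move=> q; have [c cin Hc] := EVT_max uh (within_norm (L_cont (i:=q) tu uh)).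
  by exists c.
have [cq Hcq] := choice Hmax.
pose B := \big[Num.max/B0]_q `|e q (cq q)|.
have BB0 : B0 <= B by exact: bigmax_ge_id.
have Hall : forall q t, u <= t <= u + h0 -> `|e q t| <= B.
  move=> q t ht; apply: (le_trans (proj2 (Hcq q) t _)); first by rewrite in_itv /=.
  exact: le_bigmax.
have Hhalf : forall q t, u <= t <= u + h0 -> `|e q t| <= B0 + (B - B0) / 2.
  move=> q t /andP[ut th].
  have key : forall sg, `|sg| = 1 -> sg * e q t <= B0 + (B - B0) / 2.
    move=> sg hsg.
    have HB : forall q' s, u <= s <= t -> `|e q' s| <= B.
      move=> q' s /andP[us st]; apply: Hall; rewrite us /=; lra.
    have := StepML q hsg tu ut B00 BB0 HB.
    have hm : Num.max (sg * e q u) B0 = B0.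
      apply: max_r; apply: (le_trans (ler_norm _)); by rewrite normrM hsg mul1r.
    have := small (X := B - B0) (y := t - u); rewrite hm; lra.
  rewrite ler_norml; apply/andP; split.
    have := key (-1) (ltac:(by rewrite normrN normr1)); lra.
  have := key 1 (normr1 _); lra.
have BleB0 : B <= B0.
  have : B <= B0 + (B - B0) / 2.
    apply: bigmax_le; first lra.
    move=> q _; apply: Hhalf; have := (Hcq q).1; by rewrite in_itv /=.
  lra.
move=> q t ht; exact: le_trans (Hall q t ht) BleB0.
Qed.


Lemma exists_n (x : R) : 0 <= x -> exists n : nat, x <= n%:R * h0.
Proof.
move=> x0; have h00 := h0_gt0.
have := archi_boundP (divr_ge0 x0 (ltW h00)).
set n := Num.bound _ => hn; exists n.
by rewrite -ler_pdivrMr // ltW.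
Qed.

Lemma MaxAll u B0 : t0 <= u -> 0 <= B0 -> (forall q, `|e q u| <= B0) ->
  forall q t, u <= t -> `|e q t| <= B0.
Proof.
move=> tu B00 Hu.
have h00 := h0_gt0.
have Hn : forall n : nat, forall q t, u <= t <= u + n%:R * h0 -> `|e q t| <= B0.
  elim=> [|n IH] q t.
    rewrite mul0r addr0 => /andP[t1 t2].
    by have -> : t = u by apply/eqP; rewrite eq_le t1 t2.
  move=> /andP[ut tn].
  have nh : 0 <= n%:R * h0 by apply: mulr_ge0 => //; exact: ltW.
  have [tle|tgt] := leP t (u + n%:R * h0); first by apply: IH; rewrite ut tle.
  apply: (MaxStep (u := u + n%:R * h0)) => //.
  - lra.
  - by move=> q'; apply: IH; rewrite lexx andbT; lra.
  - by rewrite (ltW tgt) /=; move: tn; rewrite -natr1 mulrDl mul1r addrA.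
move=> q t ut; have [n hn] := exists_n (x := t - u) (ltac:(lra)).
by apply: (Hn n); rewrite ut /=; lra.
Qed.


Lemma DecayStep i w m th t : t0 <= w -> 0 <= th -> `|e i w| <= m - th ->
  (forall q, `|e q w| <= m) -> w <= t <= w + h0 -> `|e i t| <= m - th / 2.
Proof.
move=> tw th0 hi hall /andP[wt th'].
have c0 : 0 <= m - th by apply: le_trans hi.
have m0 : 0 <= m by lra.
have HB : forall q s, w <= s <= t -> `|e q s| <= m.
  by move=> q s /andP[ws _]; apply: (MaxAll tw m0 hall).
have key : forall sg, `|sg| = 1 -> sg * e i t <= m - th / 2.
  move=> sg hsg.
  have cm : m - th <= m by lra.
  have := StepML i hsg tw wt c0 cm HB.
  have hm : Num.max (sg * e i w) (m - th) = m - th.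
    apply: max_r; apply: (le_trans (ler_norm _)); by rewrite normrM hsg mul1r.
  have := small (X := m - (m - th)) (y := t - w); rewrite hm; lra.
rewrite ler_norml; apply/andP; split.
  have := key (-1) (ltac:(by rewrite normrN normr1)); lra.
have := key 1 (normr1 _); lra.
Qed.

Lemma Decay i u m th : t0 <= u -> 0 <= th -> `|e i u| <= m - th ->
  (forall q, `|e q u| <= m) ->
  forall n : nat, forall t, u <= t <= u + n%:R * h0 -> `|e i t| <= m - th / 2 ^+ n.
Proof.
move=> tu th0 hi hall.
have h00 := h0_gt0.
have m0 : 0 <= m by have := hall i; have := normr_ge0 (e i u); lra.
elim=> [|n IH] t.
  rewrite mul0r addr0 expr0 divr1 => /andP[t1 t2].
  by have -> : t = u by apply/eqP; rewrite eq_le t1 t2.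
move=> /andP[ut tn].
have nh : 0 <= n%:R * h0 by apply: mulr_ge0 => //; exact: ltW.
have eq2 : th / 2 ^+ n.+1 = th / 2 ^+ n / 2 by rewrite exprSr invfM mulrA.
have p0 : 0 <= th / 2 ^+ n by apply: divr_ge0 => //; apply: exprn_ge0.
have [tle|tgt] := leP t (u + n%:R * h0).
  have := IH t (ltac:(by rewrite ut tle)); rewrite eq2; lra.
rewrite eq2; apply: (DecayStep (w := u + n%:R * h0)) => //.
- lra.
- by apply: IH; rewrite lexx andbT; lra.
- by move=> q; apply: (MaxAll tu m0 hall); lra.
- by rewrite (ltW tgt) /=; move: tn; rewrite -natr1 mulrDl mul1r addrA.
Qed.

Lemma CG i u L m kap : t0 <= u -> 0 < L -> 0 < m -> 0 < kap ->
  (forall t, t0 <= t -> kap <= k i t) -> (forall q, `|e q u| <= m) ->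
  exists2 tau, u <= tau <= u + L &
    `|e i tau| <= m - kap * m * L / (1 + D * L + kap * L).
Proof.
move=> tu L0 m0 k0 hk hall.
have D0 := D_ge0.
set th := kap * m * L / (1 + D * L + kap * L).
have DL0 : 0 <= D * L by apply: mulr_ge0 => //; exact: ltW.
have kL0 : 0 < kap * L by exact: mulr_gt0.
have den0 : 0 < 1 + D * L + kap * L by lra.
have thE : th * (1 + D * L + kap * L) = kap * m * L.
  by rewrite /th mulrVK //; rewrite unitfE gt_eqF.
have th0 : 0 < th by rewrite /th divr_gt0 // !mulr_gt0.
have thm : th < m.
  rewrite -(ltr_pM2r den0) thE.
  have : 0 <= m * (D * L) by apply: mulr_ge0 => //; exact: ltW.
  have : kap * m * L = m * (kap * L) by ring.
  have : m * (1 + D * L + kap * L) = m + m * (D * L) + m * (kap * L) by ring.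
  lra.
case: (pselect (exists2 tau, u <= tau <= u + L & `|e i tau| <= m - th)) => // nH.
exfalso.
have htau : forall tau, u <= tau <= u + L -> m - th < `|e i tau|.
  move=> tau htau; rewrite ltNge; apply/negP => hh; apply: nH; by exists tau.
have m0' : 0 <= m by exact: ltW.
have uL : u <= u + L by lra.
have Hm : forall q s, u <= s -> `|e q s| <= m by move=> q s us; exact: (MaxAll tu m0' hall).
pose sg : R := if 0 <= e i u then 1 else -1.
have hsg : `|sg| = 1 by rewrite /sg; case: ifP => _; rewrite ?normrN normr1.
have sgu : sg * e i u = `|e i u|.
  rewrite /sg; case: ifP => h; first by rewrite mul1r ger0_norm.
  by rewrite mulN1r ltr0_norm // ltNge h.
have nsg : forall s, `|sg * e i s| = `|e i s| by move=> s; rewrite normrM hsg mul1r.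
have uuL : u <= u <= u + L by rewrite lexx uL.
have hu : 0 < sg * e i u by rewrite sgu; have := htau u uuL; lra.
have pos : forall tau, u <= tau <= u + L -> m - th < sg * e i tau.
  move=> tau /andP[ut tL]; rewrite ltNge; apply/negP => hle.
  have hneg : sg * e i tau < 0.
    have utL : u <= tau <= u + L by rewrite ut tL.
    have := htau tau utL; rewrite -nsg ltr_normr => /orP[h1|h1]; lra.
  have cont : {within `[u, tau], continuous (fun s => sg * e i s)}.
    by apply: within_mulc; apply: L_cont.
  have hv : Num.min (sg * e i u) (sg * e i tau) <= 0 <= Num.max (sg * e i u) (sg * e i tau).
    by rewrite ge_min le_max (ltW hneg) (ltW hu) orbT.
  have [c cin hc] := IVT ut cont hv.
  move: cin; rewrite in_itv /= => /andP[uc ct].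
  have ucL : u <= c <= u + L by rewrite uc /= (le_trans ct).
  have := htau c ucL; rewrite -nsg hc normr0; lra.
have HG : forall tau, u < tau <= u + L -> ~ Z tau ->
    sg * g i tau <= D * th - kap * (m - th).
  move=> tau /andP[utau tauL] nZ.
  have t0tau : t0 <= tau by rewrite (le_trans tu) // ltW.
  apply: (le_trans (CB i tau hsg)).
  have utL : u <= tau <= u + L by rewrite (ltW utau) tauL.
  have ps := pos tau utL.
  have hs : \sum_l `|a i l tau| * (`|e l tau| - sg * e i tau) <= (\sum_l `|a i l tau|) * th.
    by apply: sum_aw => l; have := Hm l tau (ltW utau); lra.
  have hd : (\sum_l `|a i l tau|) * th <= D * th.
    by apply: ler_wpM2r; [exact: ltW|exact: sum_le_D].
  have hk' : kap * (m - th) <= k i tau * (sg * e i tau).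
    by apply: ler_pM; [exact: ltW|lra|exact: hk|exact: ltW].
  lra.
have hint := L_bound_cst tu uL HG.
have h2 := pos (u + L) (ltac:(by rewrite uL lexx)).
have h3 := hall i; rewrite -sgu in h3.
have e1 : (D * th - kap * (m - th)) * (u + L - u) = D * th * L - kap * m * L + kap * th * L by ring.
have e2 : th * (1 + D * L + kap * L) = th + D * th * L + kap * th * L by ring.
rewrite e1 in hint.
lra.
Qed.


Lemma CA j i u L m eta dl (h : R -> R) : t0 <= u -> 0 < L -> 0 < m -> 0 < eta -> eta <= m ->
  0 < dl -> (forall q, `|e q u| <= m) ->
  (forall t, u <= t <= u + L -> `|e i t| <= m - eta) ->
  (forall t, 0 <= h t <= `|a j i t|) ->
  mu.-integrable `]u, u + L] (EFin \o h) ->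
  dl * L <= \int[mu]_(t in `]u, u + L]) h t ->
  exists2 tau, u <= tau <= u + L &
    `|e j tau| <= m - eta * dl * L / (1 + D * L + dl * L).
Proof.
move=> tu L0 m0 eta0 etam dl0 hall hi hh hint hdl.
have D0 := D_ge0.
set th := eta * dl * L / (1 + D * L + dl * L).
have DL0 : 0 <= D * L by apply: mulr_ge0 => //; exact: ltW.
have kL0 : 0 < dl * L by exact: mulr_gt0.
have den0 : 0 < 1 + D * L + dl * L by lra.
have thE : th * (1 + D * L + dl * L) = eta * dl * L.
  by rewrite /th mulrVK //; rewrite unitfE gt_eqF.
have th0 : 0 < th by rewrite /th divr_gt0 // !mulr_gt0.
have theta : th < eta.
  rewrite -(ltr_pM2r den0) thE.
  have : 0 <= eta * (D * L) by apply: mulr_ge0 => //; exact: ltW.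
  have : eta * dl * L = eta * (dl * L) by ring.
  have : eta * (1 + D * L + dl * L) = eta + eta * (D * L) + eta * (dl * L) by ring.
  lra.
case: (pselect (exists2 tau, u <= tau <= u + L & `|e j tau| <= m - th)) => // nH.
exfalso.
have htau : forall tau, u <= tau <= u + L -> m - th < `|e j tau|.
  move=> tau htau; rewrite ltNge; apply/negP => hh'; apply: nH; by exists tau.
have m0' : 0 <= m by exact: ltW.
have uL : u <= u + L by lra.
have Hm : forall q s, u <= s -> `|e q s| <= m by move=> q s us; exact: (MaxAll tu m0' hall).
pose sg : R := if 0 <= e j u then 1 else -1.
have hsg : `|sg| = 1 by rewrite /sg; case: ifP => _; rewrite ?normrN normr1.
have sgu : sg * e j u = `|e j u|.
  rewrite /sg; case: ifP => h'; first by rewrite mul1r ger0_norm.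
  by rewrite mulN1r ltr0_norm // ltNge h'.
have nsg : forall s, `|sg * e j s| = `|e j s| by move=> s; rewrite normrM hsg mul1r.
have uuL : u <= u <= u + L by rewrite lexx uL.
have hu : 0 < sg * e j u by rewrite sgu; have := htau u uuL; lra.
have pos : forall tau, u <= tau <= u + L -> m - th < sg * e j tau.
  move=> tau /andP[ut tL]; rewrite ltNge; apply/negP => hle.
  have hneg : sg * e j tau < 0.
    have utL : u <= tau <= u + L by rewrite ut tL.
    have := htau tau utL; rewrite -nsg ltr_normr => /orP[h1|h1]; lra.
  have cont : {within `[u, tau], continuous (fun s => sg * e j s)}.
    by apply: within_mulc; apply: L_cont.
  have hv : Num.min (sg * e j u) (sg * e j tau) <= 0 <= Num.max (sg * e j u) (sg * e j tau).
    by rewrite ge_min le_max (ltW hneg) (ltW hu) orbT.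
  have [c cin hc] := IVT ut cont hv.
  move: cin; rewrite in_itv /= => /andP[uc ct].
  have ucL : u <= c <= u + L by rewrite uc /= (le_trans ct).
  have := htau c ucL; rewrite -nsg hc normr0; lra.
have HF : forall tau, u < tau <= u + L -> ~ Z tau ->
    sg * g j tau <= D * th - eta * h tau.
  move=> tau /andP[utau tauL] nZ.
  have t0tau : t0 <= tau by rewrite (le_trans tu) // ltW.
  apply: (le_trans (CB j tau hsg)).
  have utL : u <= tau <= u + L by rewrite (ltW utau) tauL.
  have ps := pos tau utL.
  have hk' : 0 <= k j tau * (sg * e j tau).
    by apply: mulr_ge0; [exact: Hk0|lra].
  have hD := sum_le_D j t0tau nZ.
  rewrite (bigD1 i) //= in hD; rewrite (bigD1 i) //=.
  have hs1 : \sum_(l < N | l != i) `|a j l tau| * (`|e l tau| - sg * e j tau)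
      <= (\sum_(l < N | l != i) `|a j l tau|) * th.
    rewrite mulr_suml; apply: ler_sum => l _; apply: ler_wpM2l => //.
    have := Hm l tau (ltW utau); lra.
  have hi1 : `|a j i tau| * (`|e i tau| - sg * e j tau) <= `|a j i tau| * (th - eta).
    apply: ler_wpM2l => //; have := hi tau utL; lra.
  have hd1 : (`|a j i tau| + \sum_(l < N | l != i) `|a j l tau|) * th <= D * th.
    by apply: ler_wpM2r => //; exact: ltW.
  have hh1 : eta * h tau <= eta * `|a j i tau|.
    by apply: ler_wpM2l; [exact: ltW|case/andP: (hh tau)].
  have e1 : `|a j i tau| * (th - eta) = `|a j i tau| * th - eta * `|a j i tau| by ring.
  have e2 : (`|a j i tau| + \sum_(l < N | l != i) `|a j l tau|) * th =
     `|a j i tau| * th + (\sum_(l < N | l != i) `|a j l tau|) * th by ring.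
  lra.
have Fi : mu.-integrable `]u, u + L] (EFin \o (fun t => D * th - eta * h t)).
  have i1 := itv_integrable_cst u (u + L) (D * th).
  have i2 : mu.-integrable `]u, u + L] (fun t => (eta%:E * (EFin \o h) t)%E).
    by apply: integrableZl.
  have i3 : mu.-integrable `]u, u + L] ((EFin \o cst (D * th)%R) \- (fun t => (eta%:E * (EFin \o h) t)))%E.
    by apply: integrableB.
  by apply: eq_integrable i3 => // t _ /=; rewrite EFinB EFinM.
have hb := L_bound tu uL Fi HF.
have hF : \int[mu]_(t in `]u, u + L]) (D * th - eta * h t) =
    D * th * L - eta * \int[mu]_(t in `]u, u + L]) h t.
  rewrite RintegralB //; last first.
    have i2 : mu.-integrable `]u, u + L] (fun t => (eta%:E * (EFin \o h) t)%E).
      by apply: integrableZl.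
    by apply: eq_integrable i2 => // t _ /=; rewrite EFinM.
    exact: itv_integrable_cst.
  rewrite Rint_cst_oc // RintegralZl //.
  by congr (_ - _); rewrite addrAC subrr add0r.
rewrite hF in hb.
have h2 := pos (u + L) (ltac:(by rewrite uL lexx)).
have h3 := hall j; rewrite -sgu in h3.
have hee : eta * (dl * L) <= eta * \int[mu]_(t in `]u, u + L]) h t.
  by apply: ler_wpM2l => //; exact: ltW.
have e2 : th * (1 + D * L + dl * L) = th + D * th * L + th * (dl * L) by ring.
have e3 : eta * dl * L = eta * (dl * L) by ring.
have e4 : 0 < th * (dl * L) by exact: mulr_gt0.
lra.
Qed.


Lemma first_exit (E : 'I_N -> 'I_N -> Prop) (Ls : {set 'I_N}) x y :
  dpath E x y -> x \in Ls -> y \notin Ls ->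
  exists y', exists z, [/\ y' \in Ls, z \notin Ls & E y' z].
Proof.
elim=> [x0 -> //|x0 y0 z0 _ IH Eyz] xL zL.
case: (boolP (y0 \in Ls)) => yL; first by exists y0, z0.
exact: IH.
Qed.

Lemma Fprops (al L : R) n : 0 < al -> 0 < L ->
  0 < al * L / (1 + D * L + al * L) / 2 ^+ n <= 1.
Proof.
move=> al0 L0; have D0 := D_ge0.
have DL0 : 0 <= D * L by apply: mulr_ge0 => //; exact: ltW.
have aL0 : 0 < al * L by exact: mulr_gt0.
have den0 : 0 < 1 + D * L + al * L by lra.
have p2 : 1 <= 2 ^+ n :> R by apply: exprn_ege1; lra.
apply/andP; split.
  by apply: divr_gt0; [apply: divr_gt0|apply: exprn_gt0; lra].
rewrite ler_pdivrMr; last by apply: exprn_gt0; lra.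
rewrite mul1r (le_trans _ p2) // ler_pdivrMr // mul1r; lra.
Qed.

Lemma DecayWin q s m th n0 tau H : H <= n0%:R * h0 -> t0 <= s ->
  s <= tau -> 0 <= th -> `|e q tau| <= m - th -> (forall p, `|e p s| <= m) ->
  forall t, tau <= t <= s + H -> `|e q t| <= m - th / 2 ^+ n0.
Proof.
move=> hn0 ts stau th0 hq hall t /andP[taut tN].
have m0 : 0 <= m by have := hall q; have := normr_ge0 (e q s); lra.
have t0tau : t0 <= tau := le_trans ts stau.
have hall' : forall p, `|e p tau| <= m by move=> p; exact: (MaxAll ts m0 hall).
apply: (Decay t0tau th0 hq hall' (n := n0)).
rewrite taut /=; lra.
Qed.

Variables (S : {set 'I_N}) (kap T dl : R) (Ew : R -> 'I_N -> 'I_N -> Prop).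
Hypothesis kap0 : 0 < kap.
Hypothesis T0 : 0 < T.
Hypothesis dl0 : 0 < dl.
Hypothesis HkS : forall i t, i \in S -> t0 <= t -> kap <= k i t.
Hypothesis Hroot : forall t, t0 <= t -> forall v, exists2 r, r \in S & dpath (Ew t) r v.
Hypothesis Harc : forall t y z, t0 <= t -> Ew t y z ->
  exists h : R -> R, [/\ (forall s, 0 <= h s <= `|a z y s|),
    mu.-integrable `]t, t + T] (EFin \o h) & dl * T <= \int[mu]_(s in `]t, t + T]) h s].


Lemma Contract n0 s m : (0 < N)%N -> N%:R * T <= n0%:R * h0 -> t0 <= s -> 0 < m ->
  (forall q, `|e q s| <= m) ->
  forall q, `|e q (s + N%:R * T)| <=
    m - m * (kap * T / (1 + D * T + kap * T) / 2 ^+ n0) *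
        (dl * T / (1 + D * T + dl * T) / 2 ^+ n0) ^+ N.-1.
Proof.
move=> N0 hn0 ts m0 hall.
set Fk := kap * T / _ / _.
set Fd := dl * T / _ / _.
have /andP[Fk0 Fk1] := Fprops n0 kap0 T0.
have /andP[Fd0 Fd1] := Fprops n0 dl0 T0.
have m0' : 0 <= m by exact: ltW.
have Hm : forall p t, s <= t -> `|e p t| <= m by move=> p t st; exact: (MaxAll ts m0' hall).
have D0 := D_ge0.
have DT0 : 0 <= D * T by apply: mulr_ge0 => //; exact: ltW.
have theta_pos : forall r, 0 < m * Fk * Fd ^+ r.
  by move=> r; apply: mulr_gt0; [exact: mulr_gt0|exact: exprn_gt0].
have theta_le : forall r, m * Fk * Fd ^+ r <= m.
  move=> r; rewrite -mulrA; apply: ler_piMr => //.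
  apply: mulr_ile1 => //; [exact: ltW|apply: exprn_ge0; exact: ltW|exact: exprn_ile1 (ltW Fd0) Fd1].
have theta_dec : forall r, m * Fk * Fd ^+ r.+1 <= m * Fk * Fd ^+ r.
  move=> r; rewrite exprSr mulrA; apply: ler_piMr => //.
  exact: ltW (theta_pos r).
have timeN : forall r : nat, (r <= N)%N -> s + r%:R * T <= s + N%:R * T.
  move=> r rN; rewrite lerD2l; apply: ler_wpM2r; [exact: ltW|by rewrite ler_nat].
have Inv : forall r, (r < N)%N -> exists Ls : {set 'I_N}, [/\ (r.+1 <= #|Ls|)%N, S \subset Ls &
   forall q t, q \in Ls -> s + r.+1%:R * T <= t <= s + N%:R * T ->
     `|e q t| <= m - m * Fk * Fd ^+ r].
  elim=> [|r IH] rN.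
  - exists S; split => //.
    + have [r0 r0S _] := Hroot ts (Ordinal N0).
      by rewrite card_gt0; apply/set0Pn; exists r0.
    + move=> q t qS /andP[ht1 ht2].
      have [tau /andP[stau tauT] htau] :=
        CG (i := q) ts T0 m0 kap0 (fun t' ht' => HkS qS ht') hall.
      have th0 : 0 <= kap * m * T / (1 + D * T + kap * T).
        apply: divr_ge0; first by apply: mulr_ge0; [apply: mulr_ge0|]; apply: ltW.
        have : 0 < kap * T by exact: mulr_gt0.
        lra.
      have htt : tau <= t <= s + N%:R * T.
        by rewrite ht2 andbT (le_trans tauT) // (le_trans _ ht1) // mul1r.
      have := DecayWin hn0 ts stau th0 htau hall htt.
      by rewrite expr0 mulr1 /Fk; congr (_ <= _ - _); ring.
  - have rN' : (r < N)%N by apply: ltnW.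
    have [Ls [cL SL bnd]] := IH rN'.
    have w0 : s <= s + r.+1%:R * T by rewrite lerDl; apply: mulr_ge0 => //; exact: ltW.
    have tw : t0 <= s + r.+1%:R * T := le_trans ts w0.
    have wT : s + r.+1%:R * T + T = s + r.+2%:R * T.
      by rewrite -addrA; congr (_ + _); rewrite -[in RHS]natr1 mulrDl mul1r.
    case: (boolP [exists v, v \notin Ls]) => [/existsP[v vL]|/existsPn allL].
    + have [r0 r0S hp] := Hroot tw v.
      have [y [z [yL zL Eyz]]] := first_exit hp ((fintype.subsetP SL) r0 r0S) vL.
      have [h [hh hi hdl]] := Harc tw Eyz.
      have hallw : forall p, `|e p (s + r.+1%:R * T)| <= m by move=> p; exact: Hm.
      have hy : forall t, s + r.+1%:R * T <= t <= s + r.+1%:R * T + T ->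
          `|e y t| <= m - m * Fk * Fd ^+ r.
        move=> t /andP[t1 t2]; apply: bnd => //; rewrite t1 /=.
        by rewrite (le_trans t2) // wT timeN.
      have [tau /andP[wtau tauT] htau] :=
        CA (j := z) (i := y) tw T0 m0 (theta_pos r) (theta_le r) dl0 hallw hy hh hi hdl.
      exists (z |: Ls); split.
      * by rewrite cardsU1 zL.
      * exact: (fintype.subset_trans SL (finset.subsetUr _ _)).
      * move=> q t; rewrite in_setU1 => /orP[/eqP->|qL] /andP[ht1 ht2].
        - have th0 : 0 <= m * Fk * Fd ^+ r * dl * T / (1 + D * T + dl * T).
            have dT : 0 < dl * T by exact: mulr_gt0.
            apply: divr_ge0; last by lra.
            apply: mulr_ge0; last exact: ltW.
            apply: mulr_ge0; last exact: ltW.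
            exact: ltW (theta_pos r).
          have stau : s <= tau := le_trans w0 wtau.
          have htt : tau <= t <= s + N%:R * T.
            by rewrite ht2 andbT (le_trans tauT) // wT.
          have := DecayWin hn0 ts stau th0 htau hall htt.
          by rewrite exprSr /Fd; congr (_ <= _ - _); ring.
        - apply: (le_trans (bnd q t qL _)); last by have := theta_dec r; lra.
          rewrite ht2 andbT (le_trans _ ht1) // lerD2l; apply: ler_wpM2r; first exact: ltW.
          by rewrite ler_nat.
    + exists Ls; split => //.
      * have -> : Ls = [set: 'I_N]%SET by apply/setP => x; rewrite inE; apply: negbNE; exact: allL.
        by rewrite cardsT card_ord.
      * move=> q t qL /andP[ht1 ht2].
        apply: (le_trans (bnd q t qL _)); last by have := theta_dec r; lra.
        rewrite ht2 andbT (le_trans _ ht1) // lerD2l; apply: ler_wpM2r; first exact: ltW.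
        by rewrite ler_nat.
have [Ls [cL SL bnd]] := Inv N.-1 (ltac:(by rewrite ltn_predL)).
move=> q; apply: bnd.
  have : Ls == [set: 'I_N]%SET.
    by rewrite eqEcard finset.subsetT /= cardsT card_ord; rewrite prednK in cL.
  by move/eqP->; rewrite finset.in_setT.
by rewrite prednK // lexx.
Qed.

End Dyn.

Section Extract.
Variable R : realType.
Local Notation mu := (@lebesgue_measure R).

Lemma arc_extract (f : R -> R) t v dl M : t < v -> 0 < dl -> (forall s, 0 <= f s) ->
  ((dl * (v - t))%R%:E <= \int[mu]_(s in `[t, v[) (f s)%:E)%E ->
  (\int[mu]_(s in `[t, v[) (f s)%:E <= (M * (v - t))%R%:E)%E ->
  exists h : R -> R, [/\ (forall s, 0 <= h s <= f s),
    mu.-integrable `]t, v] (EFin \o h) & dl / 2 * (v - t) <= \int[mu]_(s in `]t, v]) h s].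
Proof.
move=> tv dl0 f0 hlow hup.
have T0 : 0 < v - t by rewrite subr_gt0.
have f0' : forall x, [set` `[t, v[] x -> (0 <= (f x)%:E)%E by move=> x _; rewrite lee_fin.
have hlt : ((dl / 2 * (v - t))%R%:E < \int[mu]_(s in `[t, v[) (f s)%:E)%E.
  apply: lt_le_trans hlow; rewrite lte_fin ltr_pM2r //; lra.
rewrite ge0_integralE // in hlt; rewrite ge0_integralE // in hup.
have [y [h hle hE] hy] := ereal_sup_gt hlt.
have hM : (y <= (M * (v - t))%R%:E)%E.
  apply: le_trans hup; apply: ereal_sup_ubound; by exists h.
have hf : forall s, h s <= f s.
  move=> s; have := hle s; rewrite /patch; case: ifP => _; rewrite lee_fin // => hs0.
  exact: le_trans hs0 (f0 s).
have hout : forall s, ~ [set` `[t, v[] s -> h s = 0.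
  move=> s ns; have := hle s; rewrite /patch ifF; last by apply/negbTE/negP; rewrite inE.
  by rewrite lee_fin => hs0; apply/eqP; rewrite eq_le hs0 fun_ge0.
have mh : measurable_fun setT (EFin \o h) by apply/measurable_EFinP; exact: measurable_funPT.
have intT : (\int[mu]_(s in setT) (h s)%:E = y)%E.
  by rewrite integral_nnsfun // patch_setT.
have y0 : (0 <= y)%E by rewrite -hE sintegral_ge0.
have hfin : y \is a fin_num.
  by rewrite ge0_fin_numE //; apply: (le_lt_trans hM); exact: ltry.
have hint : mu.-integrable `]t, v] (EFin \o h).
  apply/integrableP; split; first exact: measurable_funTS.
  rewrite (eq_integral (fun s => (h s)%:E)); last first.
    by move=> s _ /=; first [rewrite gee0_abs // lee_fin | rewrite ger0_norm // | rewrite normr_id ger0_norm //].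
  apply: (@le_lt_trans _ _ (\int[mu]_(s in setT) (h s)%:E)%E).
    apply: ge0_subset_integral => //.
    by move=> s _; rewrite lee_fin.
  by rewrite intT -ge0_fin_numE.
exists (fun s => h s); split => //.
  by move=> s; rewrite fun_ge0 hf.
rewrite Rintegral_itv_obnd_cbnd // /Rintegral.
have -> : (\int[mu]_(s in `[t, v]) (h s)%:E = \int[mu]_(s in setT) (h s)%:E)%E.
  rewrite integral_mkcond; apply: eq_integral => s _; rewrite /patch; case: ifP => // hs.
  rewrite hout // => /= hs'; move/negbT: hs; move/negP; apply; rewrite inE /= in_itv /=.
  by move: hs'; rewrite in_itv /= => /andP[-> /ltW ->].
rewrite intT.
by move: hy; rewrite -(fineK hfin) lte_fin => /ltW.
Qed.


Lemma lower_mono (D : set R) (f1 f2 : R -> \bar R) :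
  (forall x, D x -> (0 <= f1 x)%E) -> (forall x, D x -> (f1 x <= f2 x)%E) ->
  (\int[mu]_(x in D) f1 x <= \int[mu]_(x in D) f2 x)%E.
Proof.
move=> f10 f12.
have f20 : forall x, D x -> (0 <= f2 x)%E by move=> x Dx; exact: le_trans (f10 x Dx) (f12 x Dx).
rewrite !ge0_integralE //; apply: le_ereal_sup => _ [h hle <-]; exists h => // x.
apply: (le_trans (hle x)); rewrite /patch; case: ifP => // /set_mem Dx.
exact: f12.
Qed.

Lemma mu_co (s v : R) : s <= v -> mu `[s, v[ = (v - s)%:E.
Proof.
move=> sv; rewrite lebesgue_measure_itv /= lte_fin.
have [svl|vs] := ltP s v; first by rewrite -EFinD.
have -> : s = v by apply/eqP; rewrite eq_le sv vs.
by rewrite subrr.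
Qed.

Lemma bound_at_cont (f : R -> R) t M : 0 <= M -> 0 <= t -> {for t, continuous f} ->
  (forall t1 t2, 0 <= t1 -> t1 <= t2 ->
     (\int[mu]_(s in `[t1, t2[) (`|f s|)%:E <= (M * (t2 - t1))%R%:E)%E) ->
  `|f t| <= M.
Proof.
move=> M0 t0 cf hA; rewrite leNgt; apply/negP => Mf.
set eps := (`|f t| - M) / 2.
have e0 : 0 < eps by rewrite /eps divr_gt0 // subr_gt0.
move: cf => /cvgrPdist_lt /(_ _ e0) /nbhs_ballP [d d0 H].
have d20 : 0 < d / 2 by exact: divr_gt0.
have td : t <= t + d / 2 by lra.
have hb : forall s, [set` `[t, t + d / 2[] s -> M + eps <= `|f s|.
  move=> s; rewrite /= in_itv /= => /andP[ts sd].
  have : ball t d s by rewrite -ball_normE /ball_ /= ler0_norm ?subr_le0 //; lra.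
  move=> /H hs; have := ler_dist_dist (f t) (f s).
  have : `|f t - f s| < eps by [].
  rewrite /eps; move=> h1 h2.
  have := le_trans (ler_norm _) h2; lra.
have := hA t (t + d / 2) t0 td.
set v := t + d / 2.
have hl : (\int[mu]_(s in `[t, v[) (M + eps)%R%:E <=
           \int[mu]_(s in `[t, v[) (`|f s|)%:E)%E.
  apply: lower_mono => x hx; rewrite lee_fin; last exact: hb.
  lra.
have hl' : (((M + eps) * (v - t))%R%:E <= \int[mu]_(s in `[t, v[) (`|f s|)%:E)%E.
  apply: le_trans hl; rewrite integral_cst // EFinM le_eqVlt; apply/orP; left; apply/eqP.
  congr (_ * _)%E; apply/esym; exact: mu_co.
move=> h2; have := le_trans hl' h2; rewrite lee_fin.
have -> : v - t = d / 2 by rewrite /v; ring.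
move=> h3; have := ltr_pM2r d20 M (M + eps); lra.
Qed.

End Extract.

Section Alg.
Variables (R : realType) (N : nat).

Lemma lap_sum (a : 'I_N -> 'I_N -> R -> R) t i (y : 'I_N -> R) : a i i t = 0 ->
  \sum_j signed_laplacian a t i j * y j =
  (\sum_l `|a i l t|) * y i - \sum_j a i j t * y j.
Proof.
move=> aii.
rewrite (bigD1 i) //= [X in _ = _ - X](bigD1 i) //= aii mul0r add0r.
rewrite /signed_laplacian mxE eqxx; congr (_ + _).
rewrite -sumrN; apply: eq_bigr => j ji; rewrite mxE eq_sym (negbTE ji).
by rewrite mulNr.
Qed.

Lemma gain_sum (k : 'I_N -> R -> R) t i (y : 'I_N -> R) :
  \sum_j gain_matrix k t i j * y j = k i t * y i.
Proof.
rewrite (bigD1 i) //= big1 ?addr0.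
  by rewrite /gain_matrix !mxE eqxx mulr1n.
by move=> j ji; rewrite /gain_matrix !mxE eq_sym (negbTE ji) mulr0n mul0r.
Qed.

Lemma rhs_eq (a : 'I_N -> 'I_N -> R -> R) (k : 'I_N -> R -> R) xd (x : R -> 'cV[R]_N) t i :
  a i i t = 0 ->
  closed_loop_rhs a k xd x t i ord0 =
  - (\sum_l `|a i l t|) * (x t i ord0 - xd i ord0)
  + \sum_l a i l t * (x t l ord0 - xd l ord0) - k i t * (x t i ord0 - xd i ord0).
Proof.
move=> aii; rewrite /closed_loop_rhs /control !mxE.
rewrite (lap_sum (fun j => x t j ord0) aii) (lap_sum (fun j => xd j ord0) aii).
have -> : \sum_j gain_matrix k t i j * (x t - xd) j ord0 = k i t * (x t i ord0 - xd i ord0).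
  rewrite -(gain_sum _ _ _ (fun j => x t j ord0 - xd j ord0)).
  by apply: eq_bigr => j _; rewrite !mxE.
have -> : \sum_l a i l t * (x t l ord0 - xd l ord0) =
  \sum_l a i l t * x t l ord0 - \sum_l a i l t * xd l ord0.
  by rewrite -sumrB; apply: eq_bigr => l _; ring.
ring.
Qed.


Local Notation mu := (@lebesgue_measure R).

Lemma bad_negl (a : 'I_N -> 'I_N -> R -> R) : A1 a ->
  exists Z : set R, [/\ measurable (Z : set (measurableTypeR R)), mu Z = 0%E &
    forall t, 0 <= t -> ~ Z t -> forall i l, {for t, continuous (a i l)}].
Proof.
move=> hA1.
have H : forall s : seq ('I_N * 'I_N), mu.-negligible
    [set t | 0 <= t /\ exists2 p, p \in s & ~ {for t, continuous (a p.1 p.2)}].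
  elim=> [|p s IH].
    by apply: (negligibleS _ (negligible_set0 _)) => t [_ [p]].
  apply: (negligibleS _ (negligibleU (hA1 p.1 p.2) IH)).
  move=> t [t0 [q]]; rewrite in_cons => /orP[/eqP->|qs] nc; first by left.
  by right; split => //; exists q.
have [Z [mZ muZ sZ]] := H (enum [set: 'I_N * 'I_N]%SET).
exists Z; split => // t t0 nZ i l.
apply: contrapT => nc; apply: nZ; apply: sZ; split => //.
by exists (i, l) => //; rewrite mem_enum finset.in_setT.
Qed.

End Alg.

Unset Implicit Arguments.
Set Strict Implicit.

Theorem theorem1 (R : realType) (N : nat) (a : 'I_N -> 'I_N -> R -> R)
  (delta T t0 : R) (S : {set 'I_N}) (k : 'I_N -> R -> R)
  (xd : 'cV[R]_N) (x : R -> 'cV[R]_N) :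
  (2 <= N)%N -> 0 <= t0 -> 0 < delta ->
  A1 a -> A2 a -> A3 a ->
  uqs_connected a delta T ->
  root_node_set a delta T S ->
  persistently_balanced a S ->
  P1 k t0 -> P2 k S t0 ->
  caratheodory_solution a k xd t0 x ->
  x t @[t --> +oo] --> xd.
Proof.
move=> N2 t00 d0 hA1 hA2 [M0 [HM0 hA3]] [T0 _] hroot _ _ [kap [kap0 hP2]] hsol.
pose e := fun i t => x t i ord0 - xd i ord0.
pose g := fun i t => closed_loop_rhs a k xd x t i ord0.
have [Z [mZ muZ hZ]] := bad_negl hA1.
have Hgood : forall t, t0 <= t -> ~ Z t -> forall i l, `|a i l t| <= M0.
  move=> t tt nZ i l.
  apply: (bound_at_cont (ltW HM0) (le_trans t00 tt) (hZ t (le_trans t00 tt) nZ i l)).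
  by move=> t1 t2 h1 h2; exact: hA3.
have Hk0 : forall i t, t0 <= t -> 0 <= k i t.
  move=> i t tt; have [h1 h2] := hP2 t i tt.
  case: (boolP (i \in S)) => iS; first by apply: le_trans (h1 iS); exact: ltW.
  by rewrite h2.
have Hg : forall i t, g i t =
    - (\sum_l `|a i l t|) * e i t + \sum_l a i l t * e l t - k i t * e i t.
  by move=> i t; rewrite /g /e rhs_eq.
have Hint : forall i t, t0 <= t -> (@lebesgue_measure R).-integrable `[t0, t] (EFin \o g i).
  by move=> i t tt; exact: (hsol t i tt).1.
have Heq : forall i t, t0 <= t ->
    e i t = e i t0 + \int[@lebesgue_measure R]_(s in `[t0, t]) g i s.
  move=> i t tt; rewrite /e (hsol t i tt).2; ring.
have HkS : forall i t, i \in S -> t0 <= t -> kap <= k i t.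
  by move=> i t iS tt; exact: (hP2 t i tt).1.
have Hroot : forall t, t0 <= t -> forall v, exists2 r, r \in S &
    dpath (delta_arc a delta t (t + T)) r v.
  by move=> t tt v; exact: hroot t (le_trans t00 tt) v.
have dl0 : 0 < delta / 2 by lra.
have Harc : forall t y z, t0 <= t -> delta_arc a delta t (t + T) y z ->
  exists h : R -> R, [/\ (forall s, 0 <= h s <= `|a z y s|),
    (@lebesgue_measure R).-integrable `]t, t + T] (EFin \o h) &
    delta / 2 * T <= \int[@lebesgue_measure R]_(s in `]t, t + T]) h s].
  move=> t y z tt arc.
  have tv : t < t + T by lra.
  have := arc_extract (f := fun s => `|a z y s|) (M := M0) tv d0 (fun s => normr_ge0 _) arc
    (hA3 z y t (t + T) (le_trans t00 tt) (ltW tv)).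
  by have -> : t + T - t = T by ring.
have N0 : (0 < N)%N by apply: leq_trans N2.
have NT0 : 0 <= N%:R * T by apply: mulr_ge0 => //; exact: ltW.
have NTp : 0 < N%:R * T by apply: mulr_gt0 => //; rewrite ltr0n.
have [n0 hn0] := exists_n N HM0 NT0.
pose A := kap * T / (1 + M0 *+ N * T + kap * T) / 2 ^+ n0.
pose B := delta / 2 * T / (1 + M0 *+ N * T + delta / 2 * T) / 2 ^+ n0.
have /andP[A0 A1'] : 0 < A <= 1 by exact: (Fprops N HM0 n0 kap0 T0).
have /andP[B0 B1'] : 0 < B <= 1 by exact: (Fprops N HM0 n0 dl0 T0).
pose c := A * B ^+ N.-1.
have c0 : 0 < c by apply: mulr_gt0 => //; exact: exprn_gt0.
have c1 : c <= 1.
  apply: mulr_ile1 => //; [exact: ltW|apply: exprn_ge0; exact: ltW|exact: exprn_ile1 (ltW B0) B1'].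
have Cc : forall s m, t0 <= s -> 0 < m -> (forall q, `|e q s| <= m) ->
    forall q, `|e q (s + N%:R * T)| <= m * (1 - c).
  move=> s m ts m0 hall q.
  have := Contract HM0 mZ muZ Hgood Hk0 Hg Hint Heq kap0 T0 dl0 HkS Hroot Harc N0 hn0 ts m0 hall q.
  move=> h; apply: (le_trans h); rewrite /c /A /B le_eqVlt; apply/orP; left; apply/eqP; ring.
have MA : forall u Bb, t0 <= u -> 0 <= Bb -> (forall q, `|e q u| <= Bb) ->
    forall q t, u <= t -> `|e q t| <= Bb.
  by move=> u Bb tu B00 hall q t ut; exact: (MaxAll HM0 mZ muZ Hgood Hk0 Hg Hint Heq tu B00 hall q ut).
pose Mx := 1 + \big[Num.max/0]_p `|e p t0|.
have Mx0 : 0 < Mx by have := bigmax_ge_id (index_enum 'I_N) (0 : R) predT (fun p => `|e p t0|); rewrite /Mx; lra.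
have hMx : forall p, `|e p t0| <= Mx.
  move=> p; have := le_bigmax (0 : R) (fun p => `|e p t0|) p; rewrite /Mx; lra.
pose q := 1 - c.
have q0 : 0 <= q by rewrite /q; lra.
have q1 : q < 1 by rewrite /q; lra.
have Iter : forall n : nat, forall p t, t0 + n%:R * (N%:R * T) <= t -> `|e p t| <= Mx * q ^+ n.
  elim=> [|n IH] p t.
    rewrite mul0r addr0 expr0 mulr1 => tt.
    exact: (MA t0 Mx (lexx _) (ltW Mx0) hMx p t tt).
  set s := t0 + n%:R * (N%:R * T).
  have ts : t0 <= s by rewrite /s lerDl; apply: mulr_ge0 => //.
  have hall : forall p', `|e p' s| <= Mx * q ^+ n by move=> p'; apply: IH; rewrite lexx.
  have mq0 : 0 <= Mx * q ^+ n by apply: mulr_ge0; [exact: ltW|exact: exprn_ge0].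
  have e1 : t0 + n.+1%:R * (N%:R * T) = s + N%:R * T.
    by rewrite /s -natr1 mulrDl mul1r addrA.
  rewrite e1 => st.
  have [m0|m0] := eqVneq (Mx * q ^+ n) 0.
    have := MA s 0 ts (lexx _) (fun p' => ltac:(by rewrite -m0; exact: hall p')) p t.
    by rewrite exprSr mulrA m0 mul0r; apply; lra.
  have mpos : 0 < Mx * q ^+ n by rewrite lt_neqAle eq_sym m0 mq0.
  have hs := Cc s _ ts mpos hall.
  have hq : 0 <= Mx * q ^+ n * (1 - c) by apply: mulr_ge0 => //; lra.
  have := MA (s + N%:R * T) _ (ltac:(lra)) hq hs p t st.
  by rewrite exprSr mulrA.
apply/cvgrPdist_le => eps eps0.
have qn : `|q| < 1 by rewrite ger0_norm.
have := cvg_expr qn; move/cvgrPdist_le => /(_ (eps / Mx) (divr_gt0 eps0 Mx0)).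
move=> [n1 _ Hn1]; have := Hn1 n1 (leqnn _); rewrite /= sub0r normrN ger0_norm; last exact: exprn_ge0.
move=> hq.
have hM : Mx * q ^+ n1 <= eps by rewrite -ler_pdivlMl // mulrC.
exists (t0 + n1%:R * (N%:R * T)); split; first by rewrite num_real.
move=> t ht.
change (mx_norm (xd - x t) <= eps).
rewrite mx_normrE; apply: bigmax_le => //; first exact: ltW.
move=> [i j] _; rewrite (ord1 j) /= !mxE distrC.
apply: le_trans hM; exact: Iter (ltW ht).
Qed.
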